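(* Let $f(x)=p(x)/q(x)$ where $p,q$ are real polynomials, $q$ not identically zero, $p$ not identically zero, and $p,q$ have no common real zero. Let $\Omega=\mathbb{R}\setminus\{x\in\mathbb{R}:q(x)=0\}$. Then $f:\Omega\to\mathbb{R}$ is amenable.
   Context: Relative distance on $\mathbb{R}$: $\mathrm{dist}(x,y)=0$ if $x=y=0$, $\mathrm{dist}(x,y)=|\log(y/x)|$ if $xy>0$, and $\mathrm{dist}(x,y)=\infty$ otherwise. For a real analytic function $f$ on an open set $\Omega\subseteq\mathbb{R}$, not identically zero, the condition number is $\kappa(f,x)=0$ if $x=0$, $\kappa(f,x)=\infty$ if $x\neq0$ and $f(x)=0$, and $\kappa(f,x)=|x|\,|f'(x)|/|f(x)|$ otherwise; $\mu(f,x)=1+\kappa(f,x)$. $f:\Omega\to\mathbb{R}$ is amenable if there is $C>0$ such that for every $x\in\Omega$ with $\kappa(f,x)<\infty$, the set $B_x=\{y\in\mathbb{R}:\mathrm{dist}(y,x)<1/(C\mu(f,x))\}$ is contained in $\Omega$ and $\mu(f,y)\leq C\mu(f,x)$ for all $y\in B_x$. *)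

(* Defs.v *)
From HB Require Import structures.
From mathcomp Require Import all_boot all_order all_algebra.
From mathcomp Require Import all_classical all_reals all_analysis.
Set Implicit Arguments. Unset Strict Implicit. Unset Printing Implicit Defensive.
Import Order.TTheory GRing.Theory Num.Theory.
Import numFieldNormedType.Exports.
Local Open Scope classical_set_scope.
Local Open Scope ring_scope.

Section Amenable.
Variable R : realType.

Definition rdist (x y : R) : \bar R :=
  if (x == 0) && (y == 0) then 0%E
  else if 0 < x * y then (`|ln (y / x)|)%:E
  else +oo%E.

Definition kappa (f : R -> R) (x : R) : \bar R :=
  if x == 0 then 0%E
  else if f x == 0 then +oo%E
  else (`|x| * `|derive1 f x| / `|f x|)%:E.

Definition mu (f : R -> R) (x : R) : \bar R := (1%:E + kappa f x)%E.

Definition amenable (f : R -> R) (Omega : set R) : Prop :=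
  exists C : R, 0 < C /\
    forall x, Omega x -> (kappa f x < +oo)%E ->
      let B := [set y | (rdist y x < ((C * fine (mu f x))^-1)%:E)%E] in
      B `<=` Omega /\
      forall y, B y -> (mu f y <= (C * fine (mu f x))%:E)%E.

End Amenable.

(* Main.v *)
Require Import Defs.
From mathcomp Require Import all_boot all_order all_algebra.
From mathcomp Require Import all_classical all_reals all_analysis.
From mathcomp Require Import ring lra zify.
Import Order.TTheory GRing.Theory Num.Theory.
Import numFieldNormedType.Exports.
Local Open Scope classical_set_scope.
Local Open Scope ring_scope.

Ltac eqle := rewrite le_eqVlt; apply/orP; left; apply/eqP.

Section Aux.
Variable R : realType.
Implicit Types (p a c : {poly R}) (x : R).

Lemma exp_mono1 x (m n : nat) : 1 <= x -> (m <= n)%N -> x ^+ m <= x ^+ n.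
Proof.
move=> x1 mn; rewrite -(subnK mn) exprD ler_peMl ?exprn_ege1 //.
by rewrite exprn_ge0 // (le_trans _ x1).
Qed.

Lemma poly_upper p (k : nat) x : (size p <= k.+1)%N -> 1 <= `|x| ->
  `|p.[x]| <= (\sum_(i < k.+1) `|p`_i|) * `|x| ^+ k.
Proof.
move=> sp x1; rewrite (horner_coef_wide x sp) mulr_suml.
apply: le_trans (ler_norm_sum _ _ _) _; apply: ler_sum => i _.
rewrite normrM normrX ler_wpM2l //; apply: exp_mono1 => //.
by rewrite -ltnS.
Qed.

Lemma poly_lower p x : p != 0 ->
  let n := (size p).-1 in
  let S := \sum_(i < n) `|p`_i| in
  1 + 2 * S / `|lead_coef p| <= `|x| ->
  `|lead_coef p| * `|x| ^+ n / 2 <= `|p.[x]|.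
Proof.
move=> p0 n S hx.
have lc0 : 0 < `|lead_coef p| by rewrite normr_gt0 lead_coef_eq0.
have S0 : 0 <= S by rewrite /S sumr_ge0.
have x1 : 1 <= `|x|.
  apply: le_trans hx; rewrite lerDl divr_ge0 // mulr_ge0 //.
have x0 : 0 < `|x| by apply: lt_le_trans x1.
have sp : size p = n.+1 by rewrite /n prednK // size_poly_gt0.
rewrite (@horner_coef_wide _ n.+1 p x) ?sp // big_ord_recr /=.
set rest := \sum_(i < n) _.
have hr : `|rest| * `|x| <= S * `|x| ^+ n.
  rewrite /rest /S mulr_suml; apply: le_trans.
    apply: ler_wpM2r; first exact: ltW.
    exact: ler_norm_sum.
  rewrite mulr_suml; apply: ler_sum => i _.
  rewrite normrM normrX -mulrA ler_wpM2l // -exprSr.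
  by apply: exp_mono1.
have hS : 2 * S <= `|lead_coef p| * `|x|.
  have : 2 * S / `|lead_coef p| <= `|x| by apply: le_trans _ hx; rewrite lerDr.
  by move=> h; rewrite [leRHS]mulrC -ler_pdivrMr.
have hr2 : `|rest| <= `|lead_coef p| * `|x| ^+ n / 2.
  rewrite -(ler_pM2r x0); apply: le_trans hr _.
  have xn0 : 0 <= `|x| ^+ n by rewrite exprn_ge0.
  set a := `|lead_coef p| in hS *; set X := `|x| in hS x0 *; set Xn := X ^+ n in xn0 *.
  have h3 : 0 <= (a * X - 2 * S) * Xn by rewrite mulr_ge0 // subr_ge0.
  nra.
have -> : p`_(@ord_max n) = lead_coef p by rewrite lead_coefE sp.
rewrite addrC; apply: le_trans (lerB_normD _ _).
rewrite normrM normrX.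
set L := `|lead_coef p| * `|x| ^+ n.
have -> : L / 2 = L - L / 2 by field.
by rewrite lerD2l lerN2 (le_trans hr2) // normrN.
Qed.


Lemma poly_dom a c (D : R -> R) : (size c <= size a)%N -> continuous D ->
  (forall x, 0 < D x) -> (forall x, `|a.[x]| <= D x) ->
  exists K, 0 <= K /\ forall x, `|c.[x]| <= K * D x.
Proof.
have [->|a0] := eqVneq a 0.
  move=> sca cD D0 aD; move: sca; rewrite size_poly0 leqn0 size_poly_eq0 => /eqP ->.
  by exists 0; split => // x; rewrite horner0 normr0 mul0r.
move=> sca cD D0 aD.
pose n := (size a).-1.
pose S := \sum_(i < n) `|a`_i|.
pose R1 := 1 + 2 * S / `|lead_coef a|.
pose Sc := \sum_(i < n.+1) `|c`_i|.
have lc0 : 0 < `|lead_coef a| by rewrite normr_gt0 lead_coef_eq0.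
have S0 : 0 <= S by rewrite /S sumr_ge0.
have Sc0 : 0 <= Sc by rewrite /Sc sumr_ge0.
have R11 : 1 <= R1 by rewrite /R1 lerDl divr_ge0 // mulr_ge0.
have sp : size a = n.+1 by rewrite /n prednK // size_poly_gt0.
have scn : (size c <= n.+1)%N by rewrite -sp.
pose K1 := 2 * Sc / `|lead_coef a|.
have K10 : 0 <= K1 by rewrite /K1 divr_ge0 // mulr_ge0.
have big x : R1 <= `|x| -> `|c.[x]| <= K1 * D x.
  move=> hx.
  have x1 : 1 <= `|x| by apply: le_trans hx.
  have h1 := @poly_upper c n x scn x1.
  have h2 := @poly_lower a x a0 hx.
  have h3 := aD x.
  rewrite -/n in h2.
  apply: le_trans h1 _.
  have : `|x| ^+ n <= 2 * D x / `|lead_coef a|.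
    rewrite ler_pdivlMr // mulrC -ler_pdivrMl //.
    apply: le_trans h3; apply: le_trans h2; rewrite mulrC.
    by eqle; ring.
  move=> h4; apply: le_trans (ler_wpM2l Sc0 h4) _.
  by eqle; rewrite /K1 /Sc; ring.
have R1le : - R1 <= R1 by rewrite lerNl; apply: le_trans (ltW (lt_le_trans ltr01 R11)); rewrite oppr_le0 (le_trans ler01 R11).
have [m _ hm] := EVT_min R1le (continuous_subspaceT cD).
have cc : continuous (fun x => `|c.[x]|).
  move=> x; apply: (@continuous_comp _ _ _ (horner c) Num.norm x).
    exact: continuous_horner.
  exact: norm_continuous.
have [M _ hM] := EVT_max R1le (continuous_subspaceT cc).
pose K2 := `|c.[M]| / D m.
have K20 : 0 <= K2 by rewrite /K2 divr_ge0 // ltW.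
exists (K1 + K2); split; first by rewrite addr_ge0.
move=> x; rewrite mulrDl.
have [hx|hx] := leP R1 `|x|.
  by apply: le_trans (big x hx) _; rewrite lerDl mulr_ge0 // ltW.
have xi : x \in `[- R1, R1] by rewrite in_itv /= -ler_norml ltW.
apply: (@le_trans _ _ (K2 * D x)); last by rewrite lerDr mulr_ge0 // ltW.
apply: le_trans (hM x xi) _.
rewrite /K2 -mulrA ler_peMr // mulrC ler_pdivlMr ?D0 // mul1r.
exact: hm.
Qed.


Lemma key_div p q (a : R) (k : nat) : a != 0 -> ~~ root q a ->
  ('X - a%:P) ^+ k.+1 %| p * q ->
  ('X - a%:P) ^+ k.+1 %| 'X * (p^`() * q - p * q^`()) ->
  ('X - a%:P) ^+ k.+2 %| p * q.
Proof.
move=> a0 qa h1 h2.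
set u := 'X - a%:P.
set e := u ^+ k.+1.
have cuq : coprimep u q by rewrite coprimep_sym coprimep_XsubC.
have ceq : coprimep e q by rewrite coprimep_expl.
have ceX : coprimep e 'X.
  rewrite coprimepX /root /e horner_exp hornerXsubC sub0r expf_eq0 /=.
  by rewrite oppr_eq0.
have hp : e %| p by rewrite -(Gauss_dvdpl _ ceq).
have h3 : e %| 'X * (p * q^`()) by rewrite dvdp_mull // dvdp_mulr.
have h4 : e %| 'X * (p^`() * q).
  have -> : 'X * (p^`() * q) = 'X * (p^`() * q - p * q^`()) + 'X * (p * q^`()).
    by rewrite mulrBr addrNK.
  by rewrite dvdp_addr.
have h5 : e %| p^`().
  by move: h4; rewrite mulrC (Gauss_dvdpl _ ceX) (Gauss_dvdpl _ ceq).
have [s ps] := dvdpP _ _ hp.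
have u0 : u != 0 by rewrite /u polyXsubC_eq0.
have h6 : e %| s * u ^+ k *+ k.+1.
  move: h5; rewrite ps derivM deriv_exp derivXsubC mul1r /=.
  by rewrite (dvdp_addr _ (dvdp_mull _ (dvdpp e))) mulrnAr.
have h7 : u %| s *+ k.+1.
  move: h6; rewrite /e exprSr -mulrnAl.
  by rewrite [u ^+ k * u]mulrC dvdp_mul2r // expf_neq0.
have h8 : u %| s.
  move: h7; rewrite /u !dvdp_XsubCl /root hornerMn mulrn_eq0 /=.
  done.
rewrite exprS [u * _]mulrC ps dvdp_mulr //.
by rewrite [s * e]mulrC dvdp_mul2l ?expf_neq0.
Qed.


Definition Np p q := 'X * (p^`() * q - p * q^`()).
Definition Gp p q := gcdp (p * q) (Np p q).
Definition M0 p q := (p * q) %/ Gp p q.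
Definition N0 p q := Np p q %/ Gp p q.

Lemma NpC p q : Np q p = - Np p q.
Proof. rewrite /Np; ring. Qed.

Lemma M0_root p q (a : R) : p != 0 -> q != 0 ->
  (forall x, ~ (root p x /\ root q x)) -> a != 0 -> root (p * q) a ->
  root (M0 p q) a.
Proof.
move=> p0 q0 cpq a0 ra; apply/negPn/negP => nra.
have M0' : p * q != 0 by rewrite mulf_neq0.
have [m [M1 + eM]] := multiplicity_XsubC (p * q) a.
rewrite M0' /= => nM1.
set u := 'X - a%:P.
have u0 : u != 0 by rewrite /u polyXsubC_eq0.
case: m eM => [|k] eM.
  by move: ra nM1; rewrite eM expr0 mulr1 => ->.
have hg : u ^+ k.+1 %| Gp p q.
  have hM : u ^+ k.+1 %| M0 p q * Gp p q.
    by rewrite /M0 divpK ?dvdp_gcdl // eM dvdp_mull.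
  have cop : coprimep (u ^+ k.+1) (M0 p q).
    by rewrite coprimep_expl // coprimep_sym coprimep_XsubC.
  by move: hM; rewrite (Gauss_dvdpr _ cop).
have hN : u ^+ k.+1 %| Np p q by apply: dvdp_trans hg (dvdp_gcdr _ _).
have hMk : u ^+ k.+1 %| p * q by rewrite eM dvdp_mull.
have h2 : u ^+ k.+2 %| p * q.
  move: ra; rewrite /root hornerM mulf_eq0 => /orP[pa|qa].
    apply: key_div => //; apply/negP => qa; apply: (cpq a); split => //.
  rewrite mulrC; apply: key_div => //.
  - by apply/negP => pa; apply: (cpq a); split.
  - by rewrite mulrC.
  - by move: hN; rewrite -(dvdpNr _ (Np p q)) -NpC.
move: h2; rewrite eM exprSr [_ * u]mulrC dvdp_mul2r ?expf_neq0 //.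
by rewrite dvdp_XsubCl (negbTE nM1).
Qed.


Lemma Gp_neq0 p q : p * q != 0 -> Gp p q != 0.
Proof. by move=> h; rewrite /Gp gcdp_eq0 negb_and h. Qed.

Lemma M0_G p q : p * q = M0 p q * Gp p q.
Proof. by rewrite /M0 divpK ?dvdp_gcdl. Qed.

Lemma N0_G p q : Np p q = N0 p q * Gp p q.
Proof. by rewrite /N0 divpK ?dvdp_gcdr. Qed.

Lemma M0N0_nz p q (x : R) : p * q != 0 -> 0 < (M0 p q).[x] ^+ 2 + (N0 p q).[x] ^+ 2.
Proof.
move=> h; have cop : coprimep (M0 p q) (N0 p q) by apply: coprimep_div_gcd; rewrite h.
have [m0|m0] := eqVneq (M0 p q).[x] 0.
  have : (N0 p q).[x] != 0 by apply: coprimep_root cop _; rewrite /root m0.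
  by move=> n0; rewrite m0 expr0n /= add0r exprn_even_gt0 //= n0 orbT.
by rewrite ltr_pwDl ?sqr_ge0 // exprn_even_gt0 //= m0 orbT.
Qed.

Lemma size_Np p q : p != 0 -> q != 0 -> (size (Np p q) <= size (p * q)%R)%N.
Proof.
move=> p0 q0.
have h5 := lt_size_deriv p0.
have h6 := lt_size_deriv q0.
have h8 : (0 < size p)%N by rewrite size_poly_gt0.
have h9 : (0 < size q)%N by rewrite size_poly_gt0.
have hX : size ('X : {poly R}) = 2%N by rewrite size_polyX.
rewrite /Np; apply: (leq_trans (size_polyMleq _ _)); rewrite hX add2n /= size_mul //.
apply: leq_ltn_trans (size_polyD _ _) _; rewrite size_polyN gtn_max; apply/andP; split.
  apply: leq_ltn_trans (size_polyMleq _ _) _; move: h5 h8 h9.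
  move: (size p^`()) (size p) (size q) => a b c; lia.
apply: leq_ltn_trans (size_polyMleq _ _) _; move: h6 h8 h9.
move: (size q^`()) (size p) (size q) => a b c; lia.
Qed.

Lemma size_N0 p q : p != 0 -> q != 0 -> (size (N0 p q) <= size (M0 p q))%N.
Proof.
move=> p0 q0; have G0 := @Gp_neq0 p q (mulf_neq0 p0 q0).
rewrite /N0 /M0 !size_divp //.
have := @size_Np p q p0 q0; move: (size (Np p q)) (size (p * q)%R) (size (Gp p q)) => a b c; lia.
Qed.


Lemma size_XD c : (size ('X * c^`())%R <= size c)%N.
Proof.
have [->|c0] := eqVneq c 0; first by rewrite deriv0 mulr0 size_poly0.
have hX : size ('X : {poly R}) = 2%N by rewrite size_polyX.
apply: leq_trans (size_polyMleq _ _) _; rewrite hX add2n /=.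
exact: lt_size_deriv.
Qed.

End Aux.
Arguments Np {R}. Arguments Gp {R}. Arguments M0 {R}. Arguments N0 {R}.

Section Anal.
Variable R : realType.
Variables A B : {poly R}.
Hypothesis hpos : forall x : R, 0 < A.[x] ^+ 2 + B.[x] ^+ 2.
Hypothesis hsz : (size B <= size A)%N.

Definition Dp := A ^+ 2 + B ^+ 2.
Definition sf (x : R) := Num.sqrt Dp.[x].
Definition Tf (x : R) := A.[x] * (sf x)^-1.
Definition dT (x : R) := A.[x] *: (- (sf x) ^- 2 *: ((2 * sf x)^-1 * Dp^`().[x]))
   + (sf x)^-1 *: A^`().[x].

Lemma Dp_pos (x : R) : 0 < Dp.[x].
Proof. by rewrite /Dp hornerD !horner_exp. Qed.

Lemma sf_pos (x : R) : 0 < sf x.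
Proof. by rewrite /sf sqrtr_gt0 Dp_pos. Qed.

Lemma sfA (x : R) : `|A.[x]| <= sf x.
Proof.
rewrite /sf -sqrtr_sqr ler_sqrt ?(ltW (Dp_pos x)) //.
by rewrite /Dp hornerD !horner_exp lerDl sqr_ge0.
Qed.

Lemma sfB (x : R) : `|B.[x]| <= sf x.
Proof.
rewrite /sf -sqrtr_sqr ler_sqrt ?(ltW (Dp_pos x)) //.
by rewrite /Dp hornerD !horner_exp lerDr sqr_ge0.
Qed.

Lemma Tf_derive (x : R) : is_derive x 1 Tf (dT x).
Proof.
have hD : is_derive x 1 (horner Dp) (Dp^`().[x]) by exact: is_derive_poly.
have hs := is_derive1_comp (is_derive1_sqrt (Dp_pos x)) hD.
have s0 : (Num.sqrt \o horner Dp) x != 0 by rewrite /= gt_eqF // sqrtr_gt0 Dp_pos.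
have hV := is_deriveV s0 hs.
have hM := is_deriveM (is_derive_poly A x) hV.
have -> : Tf = (horner A * (fun y => ((Num.sqrt \o horner Dp) y)^-1)).
  by apply/funext => y.
exact: hM.
Qed.

Lemma sf_cont : continuous sf.
Proof.
move=> x; apply: (@continuous_comp _ _ _ (horner Dp) Num.sqrt x).
  exact: continuous_horner.
exact: sqrt_continuous.
Qed.

Lemma dT_bound : exists L, 0 <= L /\ forall x, `|x * dT x| <= L.
Proof.
have [K1 [K10 h1]] := @poly_dom R A ('X * A^`()) sf (@size_XD R A) sf_cont sf_pos sfA.
have [K2 [K20 h2]] := @poly_dom R A ('X * B^`()) sf (leq_trans (@size_XD R B) hsz) sf_cont sf_pos sfA.
pose K := K1 + K2.
have hK1 x : `|x * A^`().[x]| <= K * sf x.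
  have := h1 x; rewrite hornerM hornerX => h; apply: le_trans h _.
  by rewrite ler_wpM2r ?(ltW (sf_pos x)) // lerDl.
have hK2 x : `|x * B^`().[x]| <= K * sf x.
  have := h2 x; rewrite hornerM hornerX => h; apply: le_trans h _.
  by rewrite ler_wpM2r ?(ltW (sf_pos x)) // lerDr.
exists (3 * K); split; first by rewrite mulr_ge0 // addr_ge0.
move=> x.
have s0 := sf_pos x.
set s := sf x.
set al := A.[x] / s.
set be := B.[x] / s.
set mu := x * A^`().[x] / s.
set nu := x * B^`().[x] / s.
have hal : `|al| <= 1 by rewrite /al normrM normfV (gtr0_norm s0) ler_pdivrMr // mul1r sfA.
have hbe : `|be| <= 1 by rewrite /be normrM normfV (gtr0_norm s0) ler_pdivrMr // mul1r sfB.
have hmu : `|mu| <= K by rewrite /mu normrM normfV (gtr0_norm s0) ler_pdivrMr // hK1.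
have hnu : `|nu| <= K by rewrite /nu normrM normfV (gtr0_norm s0) ler_pdivrMr // hK2.
have hDd : Dp^`().[x] = 2 * A.[x] * A^`().[x] + 2 * B.[x] * B^`().[x].
  rewrite /Dp derivD !deriv_exp /= !hornerD !hornerM !expr1.
  ring.
have -> : x * dT x = mu - al * (al * mu + be * nu).
  rewrite /dT hDd /mu /al /be /nu -/s /= /GRing.scale /=.
  have sn : s != 0 by rewrite gt_eqF.
  move: sn; generalize s (A.[x]) (A^`().[x]) (B.[x]) (B^`().[x]) x.
  by move=> s1 a1 a2 b1 b2 x1 sn; field.
have K0 : 0 <= K by rewrite addr_ge0.
apply: le_trans (ler_normB _ _) _.
have h3 : `|al * (al * mu + be * nu)| <= 2 * K.
  rewrite normrM -[2 * K]mul1r; apply: ler_pM => //.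
  apply: le_trans (ler_normD _ _) _; have -> : 2 * K = K + K by ring.
  by apply: lerD; rewrite normrM -[K]mul1r; apply: ler_pM.
have -> : 3 * K = K + 2 * K by ring.
exact: lerD.
Qed.


Lemma Tf_cont : continuous Tf.
Proof.
move=> z; apply: differentiable_continuous; apply/derivable1_diffP.
by case: (Tf_derive z).
Qed.

Lemma Tf_lip : exists L, 0 <= L /\ forall x y : R, x != 0 -> `|y - x| <= `|x| / 2 ->
  `|Tf y - Tf x| <= L * `|y - x| / `|x|.
Proof.
have [L0 [L00 hL]] := dT_bound.
exists (2 * L0); split; first by rewrite mulr_ge0.
move=> x y x0 hyx.
have xp : 0 < `|x| by rewrite normr_gt0.
have hc : forall c, `|c - x| <= `|y - x| -> `|dT c| * `|y - x| <= 2 * L0 * `|y - x| / `|x|.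
  move=> c hcx.
  have cx : `|x| / 2 <= `|c|.
    have h1 : `|x| <= `|c| + `|c - x|.
      by rewrite -[x in `|x| <= _](subKr c x) ler_normB.
    have h2 : `|c - x| <= `|x| / 2 by apply: le_trans hyx.
    lra.
  have c0 : 0 < `|c| by apply: lt_le_trans cx; rewrite divr_gt0.
  have hd : `|dT c| <= L0 / `|c|.
    by rewrite ler_pdivlMr // mulrC -normrM hL.
  have hd2 : L0 / `|c| <= 2 * L0 / `|x|.
    rewrite ler_pdivrMr // mulrC mulrA ler_pdivlMr //.
    have : `|x| * L0 <= (2 * `|c|) * L0 by rewrite ler_wpM2r //; lra.
    by move=> h; apply: le_trans (le_trans _ h) _; eqle; ring.
  rewrite [_ * `|y - x| / _]mulrAC ler_wpM2r //.
  exact: le_trans hd hd2.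
have Tc : {within `[Num.min x y, Num.max x y], continuous Tf}%classic.
  exact: continuous_subspaceT Tf_cont.
have [xy|yx] := leP x y.
  have [c ci hm] := MVT_segment xy (fun z _ => Tf_derive z) (continuous_subspaceT Tf_cont).
  rewrite hm normrM; apply: hc.
  move: ci; rewrite in_itv /= => /andP[h1 h2].
  by rewrite !ger0_norm ?subr_ge0 // lerD2r.
have [c ci hm] := MVT_segment (ltW yx) (fun z _ => Tf_derive z) (continuous_subspaceT Tf_cont).
rewrite distrC hm normrM distrC; apply: hc.
move: ci; rewrite in_itv /= => /andP[h1 h2].
rewrite !ler0_norm ?subr_le0 ?(ltW yx) // !opprB lerD2l lerN2 //.
Qed.

End Anal.
Arguments Tf {R}. Arguments sf {R}. Arguments Dp {R}. Arguments dT {R}.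

Section Final.
Variable R : realType.

Lemma ln_close (w d : R) : 0 < w -> `|ln w| < d -> d <= 1 / 2 -> `|w - 1| <= 2 * d.
Proof.
move=> w0 hl hd.
have d0 : 0 < d by apply: le_lt_trans hl.
have [w1|w1] := leP 1 w.
  have h1 : ln (w^-1) <= w^-1 - 1.
    have := @le_ln1Dx R (w^-1 - 1); rewrite addrCA subrr addr0; apply.
    by rewrite -subr_gt0 opprK subrK invr_gt0.
  rewrite lnV ?posrE // in h1.
  have h2 : ln w < d by apply: le_lt_trans (ler_norm _) hl.
  have h3 : w - 1 <= ln w * w.
    have : - ln w * w <= (w^-1 - 1) * w by rewrite ler_wpM2r // ltW.
    by rewrite mulrBl mulVf ?gt_eqF // mul1r mulNr => h; rewrite -lerN2 opprB.
  have h4 : ln w * w <= d * w by rewrite ler_wpM2r ?ltW.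
  rewrite ger0_norm ?subr_ge0 //.
  nra.
have h1 : ln w <= w - 1.
  by have := @le_ln1Dx R (w - 1); rewrite addrCA subrr addr0; apply; rewrite -subr_gt0 opprK subrK.
have h2 : - ln w < d by apply: le_lt_trans (ler_normlW _) hl; rewrite normrN.
rewrite ltr0_norm ?subr_lt0 // opprB.
lra.
Qed.

Lemma f_derive (p q : {poly R}) (x : R) : q.[x] != 0 ->
  is_derive x 1 (fun y : R => p.[y] / q.[y])
    (p.[x] *: (- q.[x] ^- 2 *: q^`().[x]) + q.[x]^-1 *: p^`().[x]).
Proof.
move=> q0.
have hV := is_deriveV q0 (is_derive_poly q x).
have hM := is_deriveM (is_derive_poly p x) hV.
have -> : (fun y : R => p.[y] / q.[y]) = (horner p * (fun y => (q.[y])^-1)).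
  by apply/funext => y.
exact: hM.
Qed.

Lemma kappa_val (p q : {poly R}) (x : R) : x != 0 -> q.[x] != 0 -> p.[x] != 0 ->
  kappa (fun y : R => p.[y] / q.[y]) x = (`|(Np p q).[x] / (p * q).[x]|)%:E.
Proof.
move=> x0 q0 p0.
rewrite /kappa (negbTE x0) mulf_eq0 invr_eq0 (negbTE p0) (negbTE q0) /=.
rewrite derive1E (@derive_val _ _ _ _ _ _ _ (@f_derive p q x q0)).
congr (_%:E).
rewrite -normrM -normfV -normrM; congr (`| _ |).
rewrite /Np hornerM hornerX !hornerE /GRing.scale /=.
have e : forall x1 a b c d : R, a != 0 -> b != 0 ->
  x1 * (a * (- b ^- 2 * d) + b^-1 * c) / (a / b) = x1 * (c * b - a * d) / (a * b).
  by move=> x1 a b c d a0 b0; field; rewrite a0 b0.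
exact: e.
Qed.


Lemma T_mu (A B : {poly R}) (x : R) : 0 < A.[x] ^+ 2 + B.[x] ^+ 2 -> A.[x] != 0 ->
  1 <= `|Tf A B x| * (1 + `|B.[x] / A.[x]|) <= 2.
Proof.
move=> hp a0.
have Dx : (Dp A B).[x] = A.[x] ^+ 2 + B.[x] ^+ 2 by rewrite /Dp hornerD !horner_exp.
have s0 : 0 < sf A B x by rewrite /sf sqrtr_gt0 Dx.
have s2 : sf A B x ^+ 2 = `|A.[x]| ^+ 2 + `|B.[x]| ^+ 2.
  by rewrite /sf sqr_sqrtr Dx ?(ltW hp) // !real_normK ?num_real.
have sa : `|A.[x]| <= sf A B x.
  by rewrite /sf -sqrtr_sqr ler_sqrt ?Dx ?(ltW hp) // lerDl sqr_ge0.
have sb : `|B.[x]| <= sf A B x.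
  by rewrite /sf -sqrtr_sqr ler_sqrt ?Dx ?(ltW hp) // lerDr sqr_ge0.
have ap : 0 < `|A.[x]| by rewrite normr_gt0.
have -> : `|Tf A B x| * (1 + `|B.[x] / A.[x]|) = (`|A.[x]| + `|B.[x]|) / sf A B x.
  rewrite /Tf normrM normfV (gtr0_norm s0) normrM normfV.
  move: (sf A B x) s0 (`|A.[x]|) ap (`|B.[x]|) => s s0' a ap' b.
  by field; rewrite !gt_eqF.
move: s2 sa sb; move: (sf A B x) s0 (`|A.[x]|) ap (`|B.[x]|) (normr_ge0 B.[x]).
move=> s s0' a ap' b b0 s2 sa sb.
rewrite ler_pdivlMr // ler_pdivrMr // mul1r; apply/andP; split.
  nra.
lra.
Qed.

Lemma kappa_M0 (p q : {poly R}) (x : R) : p * q != 0 -> x != 0 -> q.[x] != 0 -> p.[x] != 0 ->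
  (M0 p q).[x] != 0 /\
  kappa (fun y : R => p.[y] / q.[y]) x = (`|(N0 p q).[x] / (M0 p q).[x]|)%:E.
Proof.
move=> pq0 x0 q0 p0.
have Mx : (p * q).[x] != 0 by rewrite hornerM mulf_neq0.
have := Mx; rewrite (@M0_G R p q) hornerM mulf_eq0 negb_or => /andP[m0 g0].
split => //.
rewrite kappa_val // (@N0_G R p q) (@M0_G R p q) !hornerM.
by rewrite -mulf_div divff // mulr1.
Qed.

End Final.

Theorem mainTheorem7 (R : realType) (p q : {poly R}) :
  p != 0 -> q != 0 ->
  (forall x : R, ~ (root p x /\ root q x)) ->
  amenable (fun x : R => p.[x] / q.[x]) [set x : R | q.[x] != 0].
Proof.
move=> p0 q0 cpq.
have pq0 : p * q != 0 by rewrite mulf_neq0.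
pose A := M0 p q; pose B := N0 p q.
have hpos : forall x : R, 0 < A.[x] ^+ 2 + B.[x] ^+ 2 by move=> x; exact: M0N0_nz.
have hsz : (size B <= size A)%N by exact: size_N0.
have [L [L0 hL]] := @Tf_lip R A B hpos hsz.
pose C := 4 * L + 8.
have C0 : 8 <= C by rewrite /C lerDr mulr_ge0.
exists C; split; first by apply: lt_le_trans C0.
move=> x Ox kx /=.
have [x0e|x0] := eqVneq x 0.
  subst x.
  have y0 : forall y, (rdist y 0 < ((C * fine (mu (fun x : R => p.[x] / q.[x]) 0))^-1)%:E)%E -> y = 0.
    move=> y; rewrite /rdist eqxx andbT mulr0 ltxx.
    by case: eqP => // _; rewrite ltNge leey.
  have m1 : mu (fun x : R => p.[x] / q.[x]) 0 = 1%:E by rewrite /mu /kappa eqxx adde0.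
  split; first by move=> y /y0 ->.
  move=> y /y0 ->; rewrite m1 /= mulr1 lee_fin.
  by apply: le_trans C0; rewrite ler1n.
have px : p.[x] != 0.
  apply/negP => /eqP px0; move: kx.
  by rewrite /kappa (negbTE x0) px0 mul0r eqxx ltxx.
have [ax kv] := @kappa_M0 R p q x pq0 x0 Ox px.
rewrite -/A -/B in ax kv.
set rx := `|B.[x] / A.[x]| in kv.
have mv : fine (mu (fun x : R => p.[x] / q.[x]) x) = 1 + rx by rewrite /mu kv.
rewrite mv.
set m := 1 + rx.
have [Tx1 _] := andP (@T_mu R A B x (hpos x) ax).
rewrite -/m in Tx1.
have m1 : 1 <= m by rewrite /m lerDl /rx normr_ge0.
have H : forall y, (rdist y x < ((C * m)^-1)%:E)%E ->
    [/\ y != 0, q.[y] != 0, p.[y] != 0, A.[y] != 0 & 1 <= `|Tf A B y| * (2 * m)].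
  move=> y; rewrite /rdist (negbTE x0) andbF.
  have [yx|] := ltP 0 (y * x); last by rewrite ltNge leey.
  rewrite lte_fin => hl.
  set d := (C * m)^-1 in hl *.
  have m0 : 0 < m by apply: (lt_le_trans ltr01 m1).
  have Cm : 8 <= C * m by apply: (le_trans C0); rewrite ler_peMr // (le_trans _ C0) // ler0n.
  have Cm0 : 0 < C * m by apply: (lt_le_trans _ Cm); rewrite ltr0n.
  have d0 : 0 < d by rewrite /d invr_gt0.
  have dC : d * (C * m) = 1 by rewrite /d mulVf // gt_eqF.
  have d8 : d * 8 <= 1 by rewrite -[leRHS]dC ler_wpM2l // ltW.
  have w0 : 0 < y / x.
    have -> : y / x = (y * x) / (x ^+ 2) by field.
    by rewrite divr_gt0 // exprn_even_gt0 //= x0 orbT.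
  have hw : `|ln (y / x)| < d.
    by move: hl; rewrite -[x / y]invf_div lnV ?posrE // normrN.
  have hd2 : d <= 1 / 2 by lra.
  have hw1 := @ln_close R _ _ w0 hw hd2.
  have hyx : `|y - x| <= 2 * d * `|x|.
    have -> : y - x = x * (y / x - 1) by field.
    by rewrite normrM mulrC ler_wpM2r.
  have xp : 0 < `|x| by rewrite normr_gt0.
  have hyx2 : `|y - x| <= `|x| / 2.
    apply: le_trans hyx _; rewrite ler_pdivlMr //.
    rewrite mulrC mulrA -[leRHS]mul1r ler_wpM2r //; lra.
  have lip := hL x y x0 hyx2.
  have lip2 : `|Tf A B y - Tf A B x| <= L * (2 * d).
    apply: le_trans lip _; rewrite ler_pdivrMr // -mulrA ler_wpM2l //.
  have tri : `|Tf A B x| - `|Tf A B y - Tf A B x| <= `|Tf A B y|.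
    rewrite lerBlDr; have e : Tf A B x = Tf A B y - (Tf A B y - Tf A B x) by ring.
    by rewrite {1}e ler_normB.
  have key : 1 <= `|Tf A B y| * (2 * m).
    have e1 : 0 <= (`|Tf A B y| - (`|Tf A B x| - `|Tf A B y - Tf A B x|)) * m.
      by rewrite mulr_ge0 // ?subr_ge0 // ltW.
    have e2 : 0 <= (L * (2 * d) - `|Tf A B y - Tf A B x|) * m.
      by rewrite mulr_ge0 // ?subr_ge0 // ltW.
    have e3 : d * ((4 * L + 8) * m) = 1 by [].
    have e4 : 0 <= d * m by rewrite mulr_ge0 // ltW.
    nra.
  have ay : A.[y] != 0.
    apply/negP => /eqP ay0; move: key.
    by rewrite /Tf ay0 mul0r normr0 mul0r ler10.
  have y0 : y != 0 by apply/negP => /eqP y0; move: yx; rewrite y0 mul0r ltxx.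
  have npq : ~~ root (p * q) y.
    apply/negP => r; move/negP: ay; apply; exact: M0_root.
  move: npq; rewrite /root hornerM mulf_eq0 negb_or => /andP[py qy].
  by split.
split; first by move=> y /H[].
move=> y /H[y0 qy py ay hy].
have [_ kv'] := @kappa_M0 R p q y pq0 y0 qy py.
rewrite /mu kv' -EFinD lee_fin.
have [_ T2] := andP (@T_mu R A B y (hpos y) ay).
move: T2 hy; rewrite -/A -/B.
move: (`|Tf A B y|) (`|B.[y] / A.[y]|) (normr_ge0 (B.[y] / A.[y])) => t r r0 T2 hy.
have m0 : 0 < m by apply: (lt_le_trans ltr01 m1).
have e1 : 0 <= (t * (2 * m) - 1) * (1 + r) by rewrite mulr_ge0 // ?subr_ge0 // addr_ge0.
have e2 : 0 <= (2 - t * (1 + r)) * m by rewrite mulr_ge0 // ?subr_ge0 // ltW.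
have e3 : 4 * m <= C * m by rewrite ler_wpM2r ?(ltW m0) //; apply: le_trans C0; rewrite ler_nat.
nra.
Qed.
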